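(* Every point $(s:t:u:v)\in\mathcal{D}_1^{(2)}$ has $t\neq0$, and the map $sym_{\mathcal{D}_1^{(2)}}:\mathcal{D}_1^{(2)}\to\mathcal{D}_1$, $(s:t:u:v)\mapsto\left(\frac{u}{t},\frac{v}{t}\right)$, is a proper holomorphic map satisfying $sym_{\mathcal{D}_1^{(2)}}\circ J=F\circ sym$ on $\mathbb{D}\times\mathbb{D}$, where $J(z,w)=(z-w:1-zw:i(1+zw):-i(z+w))$, $F(s,p)=\left(i\frac{1+p}{1-p},\,-i\frac{s}{1-p}\right)$ and $sym(z_1,z_2)=(z_1+z_2,z_1z_2)$.
   Context: $\mathbb{D}$ is the open unit disc in $\mathbb{C}$; $\mathbb{G}=\{(z_1+z_2,z_1z_2):z_1,z_2\in\mathbb{D}\}$; $\mathcal{D}_1=\{(z_1,z_2)\in\mathbb{C}^2: 1+|z_1|^2-|z_2|^2>|1+z_1^2-z_2^2|,\ \mathrm{Im}(z_1(1+\overline{z_2}))>0\}$; $F:\mathbb{G}\to\mathcal{D}_1$ and $J:\mathbb{D}\times\mathbb{D}\to\mathcal{D}_1^{(2)}$ are biholomorphisms. Points of $\mathbb{CP}^3$ are written $(s:t:u:v)$, and $\mathcal{D}_1^{(2)}=\{(1:t:u:v): |t|^2+|u|^2-|v|^2>1,\ t^2+u^2-v^2=1,\ \mathrm{Im}(u(\overline{t}+\overline{v}))>0\}\cup\{(0:t:u:v): t^2+u^2-v^2=0,\ \mathrm{Im}(u(\overline{t}+\overline{v}))>0\}$. *)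

(* Defs.v *)
From Stdlib Require Import Reals List.
From Coquelicot Require Import Coquelicot.
Open Scope R_scope.

(* C^2, C^3, C^4 as normed C-modules, right-nested:
   a point (s:t:u:v) of CP^3 is represented by a vector (s,(t,(u,v))) in C^4. *)
Definition C2 : NormedModule C_AbsRing :=
  prod_NormedModule C_AbsRing C_NormedModule C_NormedModule.
Definition C3 : NormedModule C_AbsRing :=
  prod_NormedModule C_AbsRing C_NormedModule C2.
Definition C4 : NormedModule C_AbsRing :=
  prod_NormedModule C_AbsRing C_NormedModule C3.

Definition mk4 (s t u v : C) : C4 := (s, (t, (u, v))).
Definition c_s (x : C4) : C := fst x.
Definition c_t (x : C4) : C := fst (snd x).
Definition c_u (x : C4) : C := fst (snd (snd x)).
Definition c_v (x : C4) : C := snd (snd (snd x)).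

Definition sc4 (l : C) (x : C4) : C4 :=
  mk4 (l * c_s x)%C (l * c_t x)%C (l * c_u x)%C (l * c_v x)%C.

Definition unit_disc (z : C) : Prop := Cmod z < 1.

Definition D1 (z : C2) : Prop :=
  let z1 := fst z in let z2 := snd z in
  Cmod (1 + z1 * z1 - z2 * z2)%C < 1 + Cmod z1 ^ 2 - Cmod z2 ^ 2 /\
  0 < Im (z1 * (1 + Cconj z2))%C.

(* D_1^(2) as a set of points of CP^3, given by its (saturated) set of
   nonzero representatives in C^4: x represents a point of D_1^(2) iff
   some nonzero multiple of x has one of the two normalized forms. *)
Definition D12_normal (y : C4) : Prop :=
  let s := c_s y in let t := c_t y in let u := c_u y in let v := c_v y in
  (s = 1%C /\ 1 < Cmod t ^ 2 + Cmod u ^ 2 - Cmod v ^ 2 /\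
     (t * t + u * u - v * v)%C = 1%C /\
     0 < Im (u * (Cconj t + Cconj v))%C)
  \/
  (s = 0%C /\ (t * t + u * u - v * v)%C = 0%C /\
     0 < Im (u * (Cconj t + Cconj v))%C).

Definition D12 (x : C4) : Prop :=
  x <> mk4 0 0 0 0 /\ exists l : C, l <> 0%C /\ D12_normal (sc4 l x).

Definition sym (z1 z2 : C) : C2 := ((z1 + z2)%C, (z1 * z2)%C).

Definition F (w : C2) : C2 :=
  let s := fst w in let p := snd w in
  ((Ci * ((1 + p) / (1 - p)))%C, (- Ci * (s / (1 - p)))%C).

Definition J (z w : C) : C4 :=
  mk4 (z - w)%C (1 - z * w)%C (Ci * (1 + z * w))%C (- Ci * (z + w))%C.

Definition symD (x : C4) : C2 := ((c_u x / c_t x)%C, (c_v x / c_t x)%C).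

(* A set of points of CP^3, given as a predicate on representatives, is open
   iff it is saturated and its set of nonzero representatives is open in C^4
   (quotient topology of C^4 \ {0} -> CP^3). *)
Definition proj_open (O : C4 -> Prop) : Prop :=
  (forall (l : C) (x : C4), l <> 0%C -> x <> mk4 0 0 0 0 -> O x -> O (sc4 l x)) /\
  open (fun x : C4 => x <> mk4 0 0 0 0 /\ O x).

Definition proj_compact (A : C4 -> Prop) : Prop :=
  forall (I : Type) (O : I -> C4 -> Prop),
    (forall i, proj_open (O i)) ->
    (forall x, A x -> exists i, O i x) ->
    exists l : list I, forall x, A x -> exists i, In i l /\ O i x.

Definition compact2 (K : C2 -> Prop) : Prop :=
  forall (I : Type) (O : I -> C2 -> Prop),
    (forall i, open (O i)) ->
    (forall x, K x -> exists i, O i x) ->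
    exists l : list I, forall x, K x -> exists i, In i l /\ O i x.

(* holomorphic on an open set of C^3: complex Frechet differentiable at
   every point (linearity is over C_AbsRing, i.e. C-linear) *)
Definition holo3 (U : C3 -> Prop) (g : C3 -> C2) : Prop :=
  forall y, U y -> ex_filterdiff g (locally y).

Definition coord (k : nat) (x : C4) : C :=
  match k with 0 => c_s x | 1 => c_t x | 2 => c_u x | _ => c_v x end.

Definition chart (k : nat) (x : C4) : C3 :=
  let s := c_s x in let t := c_t x in let u := c_u x in let v := c_v x in
  match k with
  | 0 => ((t / s)%C, ((u / s)%C, (v / s)%C))
  | 1 => ((s / t)%C, ((u / t)%C, (v / t)%C))
  | 2 => ((s / u)%C, ((t / u)%C, (v / u)%C))
  | _ => ((s / v)%C, ((t / v)%C, (u / v)%C))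
  end.

Definition holo_on_proj (S : C4 -> Prop) (f : C4 -> C2) : Prop :=
  forall p, S p ->
    exists k : nat, (k <= 3)%nat /\ coord k p <> 0%C /\
    exists (U : C3 -> Prop) (g : C3 -> C2),
      open U /\ U (chart k p) /\ holo3 U g /\
      forall q, S q -> coord k q <> 0%C -> U (chart k q) -> f q = g (chart k q).

Definition proper_proj (S : C4 -> Prop) (T : C2 -> Prop) (f : C4 -> C2) : Prop :=
  forall K : C2 -> Prop, (forall z, K z -> T z) -> compact2 K ->
    proj_compact (fun x => S x /\ K (f x)).

(* Main.v *)
Require Import Defs.
From Stdlib Require Import Reals List Lra Psatz Lia.
From Coquelicot Require Import Coquelicot.

Lemma Cmod2 (a b : R) : (Cmod (a, b) ^ 2 = a ^ 2 + b ^ 2)%R.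
Proof. unfold Cmod; simpl fst; simpl snd. rewrite pow2_sqrt; [ring| nra]. Qed.

Lemma ident1 c d e f : ((c^2-d^2-e^2+f^2)^2 + (2*c*d-2*e*f)^2 =
   (c^2+d^2-e^2-f^2)^2 + 4*(d*e-c*f)^2)%R.
Proof. ring. Qed.

Lemma real_pos0 a b c d e f :
  (a^2-b^2+c^2-d^2-e^2+f^2 = 0)%R -> (2*a*b+2*c*d-2*e*f = 0)%R ->
  (0 < c*(-b-f)+d*(a+e))%R -> (0 < (a^2+b^2)+(c^2+d^2)-(e^2+f^2))%R.
Proof.
  intros H1 H2 H3.
  set (T := (a^2+b^2)%R). set (U := (c^2+d^2)%R). set (V := (e^2+f^2)%R).
  assert (E1 : (e^2-f^2 = a^2-b^2+c^2-d^2)%R) by lra.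
  assert (E2 : (e*f = a*b+c*d)%R) by lra.
  assert (HV : (V^2 = (a^2-b^2+c^2-d^2)^2 + 4*(a*b+c*d)^2)%R).
  { unfold V. rewrite <- E1, <- E2. ring. }
  assert (A : ((T+U)^2 - V^2 = 4*(b*c-a*d)^2)%R).
  { rewrite HV. unfold T, U. ring. }
  assert (E3 : (a^2-b^2 = -(c^2-d^2-e^2+f^2))%R) by lra.
  assert (E4 : (2*a*b = -(2*c*d-2*e*f))%R) by lra.
  assert (B : (T^2 = (V-U)^2 + 4*(d*e-c*f)^2)%R).
  { replace (T^2)%R with ((a^2-b^2)^2 + (2*a*b)^2)%R by (unfold T; ring).
    rewrite E3, E4. unfold U, V. ring. }
  assert (T0 : (0 <= T)%R) by (unfold T; nra).
  assert (U0 : (0 <= U)%R) by (unfold U; nra).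
  assert (V0 : (0 <= V)%R) by (unfold V; nra).
  destruct (Rlt_or_le 0 (T+U-V)) as [h|h]; [exact h|exfalso].
  assert (HS : ((T+U-V)*(T+U+V) >= 0)%R).
  { replace ((T+U-V)*(T+U+V))%R with ((T+U)^2-V^2)%R by ring. rewrite A. apply Rle_ge, Rmult_le_pos; [lra|apply pow2_ge_0]. }
  destruct (Req_dec (T+U+V) 0) as [Z|Z].
  - assert (T = 0 /\ U = 0 /\ V = 0)%R as [ZT [ZU ZV]] by lra.
    unfold T, U, V in *. assert (a = 0 /\ b = 0 /\ c = 0 /\ d = 0 /\ e = 0 /\ f = 0)%R by (repeat split; nra).
    destruct H as [-> [-> [-> [-> [-> ->]]]]]. lra.
  - assert (Z2 : (T+U = V)%R) by nra.
    assert (W1 : (b*c-a*d = 0)%R) by nra.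
    assert (W2 : (d*e-c*f = 0)%R) by (replace (V-U)%R with T in B by lra; nra).
    nra.
Qed.

Ltac cexp H := unfold Im, Re, Cmult, Cplus, Cminus, Copp, Cconj, RtoC in H; cbn [fst snd] in H.

Lemma normal_t y : D12_normal y -> c_t y <> 0%C.
Proof.
  destruct y as [s [t [u v]]]; unfold D12_normal, c_s, c_t, c_u, c_v; cbn [fst snd].
  destruct u as [c d], v as [e f].
  intros [[Hs [H1 [H2 H3]]]|[Hs [H2 H3]]] Ht; subst t;
  rewrite ?Cmod_0, ?Cmod2 in *; cexp H2; cexp H3; injection H2; intros E1 E2;
  pose proof (ident1 c d e f).
  - assert (X: (c^2-d^2-e^2+f^2 = 1)%R) by nra.
    assert (Y: (2*c*d-2*e*f=0)%R) by nra. rewrite X, Y in H. nra.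
  - assert (X: (c^2-d^2-e^2+f^2 = 0)%R) by nra.
    assert (Y: (2*c*d-2*e*f=0)%R) by nra. rewrite X, Y in H. assert (W: (0 < d*e-c*f)%R) by lra. pose proof (pow2_ge_0 (c ^ 2 + d ^ 2 - e ^ 2 - f ^ 2)). nra.
Qed.

Lemma conj_nz (t : C) : t <> 0%C -> Cconj t <> 0%C.
Proof. intros H E. apply H. pose proof (f_equal fst E) as E1. pose proof (f_equal snd E) as E2. unfold Cconj in E1, E2; simpl in E1, E2. apply injective_projections; simpl; lra. Qed.

Lemma im_part (t u v : C) : t <> 0%C ->
  Im (u / t * (1 + Cconj (v / t)))%C = (Im (u * (Cconj t + Cconj v))%C / (Cmod t ^ 2))%R.
Proof.
  intros Ht.
  assert (Hm : (Cmod t ^ 2 <> 0)%R) by (apply pow_nonzero; apply Rgt_not_eq, Cmod_gt_0, Ht).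
  assert (E : (u / t * (1 + Cconj (v / t)))%C = (u * (Cconj t + Cconj v) * RtoC (/ (Cmod t ^ 2)))%C).
  { rewrite RtoC_inv by exact Hm. rewrite Cmod2_conj, Cdiv_conj by exact Ht.
    pose proof (conj_nz t Ht). field. auto. }
  rewrite E, im_scal_r. reflexivity.
Qed.

Lemma mod_part (t u v : C) : t <> 0%C ->
  (1 + Cmod (u / t) ^ 2 - Cmod (v / t) ^ 2 = (Cmod t ^ 2 + Cmod u ^ 2 - Cmod v ^ 2) / Cmod t ^ 2)%R.
Proof.
  intros Ht. rewrite !Cmod_div by exact Ht.
  assert (0 < Cmod t)%R by (apply Cmod_gt_0, Ht). field. lra.
Qed.

Lemma normal_D1 y : D12_normal y -> D1 (symD y) /\
   (c_s y * c_s y = c_t y * c_t y + c_u y * c_u y - c_v y * c_v y)%C.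
Proof.
  intros Hy. pose proof (normal_t y Hy) as Ht.
  destruct y as [s [t [u v]]]; unfold D12_normal, symD, D1, c_s, c_t, c_u, c_v in *; cbn [fst snd] in *.
  assert (Hm : (0 < Cmod t ^ 2)%R) by (apply pow_lt, Cmod_gt_0, Ht).
  destruct Hy as [[Hs [H1 [H2 H3]]]|[Hs [H2 H3]]]; subst s.
  - split; [split|].
    + assert (E : (1 + u / t * (u / t) - v / t * (v / t) = / (t * t))%C).
      { transitivity ((t*t+u*u-v*v)/(t*t))%C; [field; auto|]. rewrite H2. field. auto. }
      rewrite E, Cmod_inv by (apply Cmult_neq_0; auto). rewrite Cmod_mult, mod_part by auto.
      replace (Cmod t * Cmod t)%R with (Cmod t ^ 2)%R by ring.
      unfold Rdiv. pose proof (Rinv_0_lt_compat _ Hm). nra.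
    + rewrite im_part by auto. apply Rdiv_lt_0_compat; lra.
    + rewrite H2. ring.
  - split; [split|].
    + assert (E : (1 + u / t * (u / t) - v / t * (v / t) = 0)%C).
      { transitivity ((t*t+u*u-v*v)/(t*t))%C; [field; auto|]. rewrite H2. field. auto. }
      rewrite E, Cmod_0, mod_part by auto. apply Rdiv_lt_0_compat; [|lra].
      destruct t as [a b], u as [c d], v as [e f]. rewrite !Cmod2.
      cexp H2; cexp H3. injection H2; intros E1 E2. apply (real_pos0 a b c d e f); nra.
    + rewrite im_part by auto. apply Rdiv_lt_0_compat; lra.
    + rewrite H2. ring.
Qed.

Lemma D12_facts x : D12 x -> c_t x <> 0%C /\ D1 (symD x) /\
   (c_s x * c_s x = c_t x * c_t x + c_u x * c_u x - c_v x * c_v x)%C.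
Proof.
  intros [Hx0 [l [Hl Hy]]].
  pose proof (normal_t _ Hy) as Ht. destruct (normal_D1 _ Hy) as [HD HE].
  destruct x as [s [t [u v]]]; unfold sc4, mk4, symD, c_s, c_t, c_u, c_v in *; cbn [fst snd] in *.
  assert (Ht' : (t : C) <> 0%C) by (intro E; apply Ht; rewrite E; apply (Cmult_0_r l)).
  split; [exact Ht'|split].
  - replace ((u/t)%C, (v/t)%C) with (((l*u)/(l*t))%C, ((l*v)/(l*t))%C); [exact HD|].
    f_equal; field; auto.
  - transitivity ((l*s)*(l*s) / (l*l))%C; [field; auto|]. rewrite HE. field. auto.
Qed.

Lemma part5 : forall z w : C, unit_disc z -> unit_disc w -> symD (J z w) = F (sym z w).
Proof.
  intros z w Hz Hw. unfold unit_disc in *.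
  assert (H : (1 - z * w)%C <> 0%C).
  { intro E. assert (E' : (z * w)%C = 1%C).
    { transitivity (1 - (1 - z*w))%C; [ring|]. rewrite E. ring. }
    pose proof (f_equal Cmod E') as E2. rewrite Cmod_mult, Cmod_1 in E2.
    pose proof (Cmod_ge_0 z). pose proof (Cmod_ge_0 w). nra. }
  unfold symD, J, F, sym, mk4, c_u, c_v, c_t; cbn [fst snd].
  f_equal; field; exact H.
Qed.

Lemma part3 : holo_on_proj D12 symD.
Proof.
  intros p Hp. destruct (D12_facts p Hp) as [Ht _].
  exists 1%nat. split; [lia|]. split; [exact Ht|].
  exists (fun _ => True), (fun y : C3 => snd y).
  split; [apply open_true|]. split; [exact I|]. split.
  - intros y _. exists (fun y : C3 => snd y). apply filterdiff_linear, is_linear_snd.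
  - intros q _ _ _. reflexivity.
Qed.

Lemma csqrt_ex (w : C) : exists s : C, (s * s = w)%C.
Proof.
  destruct w as [a b].
  set (m := sqrt (a^2 + b^2)).
  assert (Hm0 : (0 <= m)%R) by apply sqrt_pos.
  assert (Hm2 : (m * m = a^2 + b^2)%R) by (apply sqrt_sqrt; nra).
  assert (Hp : (0 <= (m + a) / 2)%R) by nra.
  assert (Hq : (0 <= (m - a) / 2)%R) by nra.
  set (x := sqrt ((m + a) / 2)). set (y0 := sqrt ((m - a) / 2)).
  assert (Hx : (x * x = (m + a) / 2)%R) by (apply sqrt_sqrt; lra).
  assert (Hy : (y0 * y0 = (m - a) / 2)%R) by (apply sqrt_sqrt; lra).
  assert (Hxy : (x * y0 = Rabs b / 2)%R).
  { unfold x, y0. rewrite <- sqrt_mult_alt by lra.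
    replace ((m + a) / 2 * ((m - a) / 2))%R with ((Rabs b / 2) * (Rabs b / 2))%R.
    - apply sqrt_square. pose proof (Rabs_pos b). lra.
    - replace ((m + a) / 2 * ((m - a) / 2))%R with ((m*m - a*a)/4)%R by field.
      rewrite Hm2. replace (Rabs b / 2 * (Rabs b / 2))%R with ((Rabs b * Rabs b)/4)%R by field.
      rewrite <- Rabs_mult, Rabs_right by nra. field. }
  destruct (Rle_dec 0 b) as [hb|hb].
  - exists (x, y0). unfold Cmult; cbn [fst snd]. rewrite Rabs_right in Hxy by lra.
    apply injective_projections; cbn [fst snd]; lra.
  - exists (x, (- y0)%R). unfold Cmult; cbn [fst snd]. rewrite Rabs_left in Hxy by lra.
    apply injective_projections; cbn [fst snd]; lra.
Qed.

Lemma root_cases (s r : C) : (s * s = r * r)%C -> s = r \/ s = (- r)%C.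
Proof.
  intros H.
  assert (E : ((s - r) * (s + r) = 0)%C).
  { transitivity (s*s - r*r)%C; [ring|]. rewrite H. ring. }
  pose proof (f_equal Cmod E) as E2. rewrite Cmod_mult, Cmod_0 in E2.
  destruct (Rmult_integral _ _ E2) as [h|h]; apply Cmod_eq_0 in h; [left|right].
  - transitivity (r + (s - r))%C; [ring|]. rewrite h. ring.
  - transitivity (- r + (s + r))%C; [ring|]. rewrite h. ring.
Qed.

Definition psi (s : C) (z : C2) : C4 := mk4 s 1%C (fst z) (snd z).
Definition Q (z : C2) : C := (1 + fst z * fst z - snd z * snd z)%C.

Lemma symD_psi s z : symD (psi s z) = z.
Proof.
  destruct z as [z1 z2]. unfold symD, psi, mk4, c_u, c_v, c_t; cbn [fst snd].
  apply injective_projections; cbn [fst snd]; [change (@eq C (z1/1)%C z1)| change (@eq C (z2/1)%C z2)]; field; exact C1_nz.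
Qed.

Lemma psi_nz s z : psi s z <> mk4 0 0 0 0.
Proof.
  intro E. pose proof (f_equal c_t E) as E2. unfold c_t, psi, mk4 in E2; cbn [fst snd] in E2. exact (C1_nz E2).
Qed.

Lemma psi_D12 s z : D1 z -> (s * s = Q z)%C -> D12 (psi s z).
Proof.
  intros [H1 H2] Hs. split; [apply psi_nz|].
  destruct z as [z1 z2]; unfold Q in Hs; cbn [fst snd] in *.
  destruct (Ceq_dec s 0) as [E|E].
  - exists 1%C. split; [exact C1_nz|]. right.
    unfold sc4, psi, mk4, c_s, c_t, c_u, c_v; cbn [fst snd].
    split; [rewrite E; ring|]. split.
    + transitivity (1 + z1*z1 - z2*z2)%C; [ring|]. rewrite <- Hs, E. ring.
    + replace (1 * z1 * (Cconj (1 * 1) + Cconj (1 * z2)))%C with (z1 * (1 + Cconj z2))%C; [exact H2|].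
      rewrite !Cmult_1_l. f_equal. f_equal. unfold Cconj; cbn [fst snd]. 
      unfold RtoC; apply injective_projections; simpl; lra.
  - assert (Ei : (/ s)%C <> 0%C).
    { intro h. apply C1_nz. rewrite <- (Cinv_r s E), h. ring. }
    assert (Hm : (0 < Cmod s)%R) by (apply Cmod_gt_0, E).
    assert (HQ : (Cmod s ^ 2 = Cmod (1 + z1 * z1 - z2 * z2))%R).
    { rewrite <- Hs, Cmod_mult. ring. }
    exists (/ s)%C. split; [exact Ei|]. left.
    unfold sc4, psi, mk4, c_s, c_t, c_u, c_v; cbn [fst snd].
    split; [field; exact E|]. split; [|split].
    + rewrite !Cmod_mult, Cmod_inv, Cmod_1 by exact E.
      replace ((/ Cmod s * 1) ^ 2 + (/ Cmod s * Cmod z1) ^ 2 - (/ Cmod s * Cmod z2) ^ 2)%R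
        with ((1 + Cmod z1 ^ 2 - Cmod z2 ^ 2) * / (Cmod s ^ 2))%R by (field; lra).
      assert (Hm2 : (0 < Cmod s ^ 2)%R) by (apply pow_lt; lra).
      replace 1%R with (Cmod s ^ 2 * / (Cmod s ^ 2))%R at 1 by (field; lra).
      apply Rmult_lt_compat_r; [apply Rinv_0_lt_compat; lra|]. lra.
    + transitivity ((1 + z1 * z1 - z2 * z2) / (s * s))%C; [field; exact E|].
      rewrite <- Hs. field. exact E.
    + assert (Hm2 : (Cmod s ^ 2 <> 0)%R) by (apply pow_nonzero; lra).
      assert (Eq : (/ s * z1 * (Cconj (/ s * 1) + Cconj (/ s * z2)) =
                    z1 * (1 + Cconj z2) * RtoC (/ (Cmod s ^ 2)))%C).
      { rewrite RtoC_inv by exact Hm2. rewrite Cmod2_conj, !Cmult_conj, Cinv_conj by exact E.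
        assert (C1c : (Cconj 1 = 1)%C) by (unfold Cconj, RtoC; apply injective_projections; simpl; lra). rewrite C1c.
        pose proof (conj_nz s E). field. auto. }
      rewrite Eq, im_scal_r. apply Rmult_lt_0_compat; [exact H2|].
      apply Rinv_0_lt_compat, pow_lt; lra.
Qed.

Lemma open_list {I : Type} (O : I -> C4 -> Prop)
  (hO : forall i, open (fun x : C4 => x <> mk4 0 0 0 0 /\ O i x)) (L : list I) :
  open (fun x : C4 => exists i, In i L /\ (x <> mk4 0 0 0 0 /\ O i x)).
Proof.
  induction L as [|a L IH].
  - apply (open_ext (fun _ => False)); [|apply open_false].
    intros x; split; [tauto|]. intros [i [[] _]].
  - apply (open_ext (fun x => (x <> mk4 0 0 0 0 /\ O a x) \/
                              (exists i, In i L /\ (x <> mk4 0 0 0 0 /\ O i x)))).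
    + intros x; split.
      * intros [h|[i [h1 h2]]]; [exists a; simpl; auto| exists i; simpl; auto].
      * intros [i [[<-|h1] h2]]; [left; exact h2| right; exists i; auto].
    + apply open_or; [apply hO|exact IH].
Qed.

Lemma sqrt2_lt_2 : (sqrt 2 < 2)%R.
Proof.
  rewrite <- (sqrt_square 2) at 2 by lra. apply sqrt_lt_1; lra.
Qed.

Lemma Q_diff (z z0 : C2) :
  (Q z - Q z0 = (fst z - fst z0) * ((fst z - fst z0) + 2 * fst z0)
               - (snd z - snd z0) * ((snd z - snd z0) + 2 * snd z0))%C.
Proof. unfold Q. ring. Qed.

Lemma W_open (N : C4 -> Prop) : open N ->
  open (fun z : C2 => forall s, (s * s = Q z)%C -> N (psi s z)).
Proof.
  intros hN z0 Hz0.
  destruct (csqrt_ex (Q z0)) as [s0 Hs0].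
  assert (HN1 := Hz0 s0 Hs0).
  assert (HN2 : N (psi (- s0) z0)) by (apply Hz0; rewrite <- Hs0; ring).
  destruct (hN _ HN1) as [e1 He1]. destruct (hN _ HN2) as [e2 He2].
  set (e := Rmin e1 e2).
  assert (He : (0 < e)%R) by (unfold e; apply Rmin_pos; apply cond_pos).
  set (M := (2 + 2 * Cmod (fst z0) + 2 * Cmod (snd z0))%R).
  assert (HM : (0 < M)%R) by (unfold M; pose proof (Cmod_ge_0 (fst z0)); pose proof (Cmod_ge_0 (snd z0)); lra).
  set (eta := (e^2 / (M + e^2))%R).
  assert (He2p : (0 < e^2)%R) by (apply pow_lt; lra).
  assert (Heta : (0 < eta)%R) by (unfold eta; apply Rdiv_lt_0_compat; lra).
  assert (Heta1 : (eta < 1)%R) by (unfold eta; apply Rmult_lt_reg_r with (M + e^2)%R; [lra|]; field_simplify; lra).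
  assert (HetaM : (eta * M < e^2)%R).
  { unfold eta. apply Rmult_lt_reg_r with (M + e^2)%R; [lra|]. field_simplify; [|lra]. nra. }
  set (d := Rmin e (eta / 2)).
  assert (Hd : (0 < d)%R) by (unfold d; apply Rmin_pos; lra).
  exists (mkposreal d Hd). intros z [Hz1 Hz2] s Hs. simpl in Hz1, Hz2.
  assert (Hde : (d <= e)%R) by (unfold d; apply Rmin_l).
  assert (Hdeta : (d <= eta / 2)%R) by (unfold d; apply Rmin_r).
  pose proof sqrt2_lt_2 as S2.
  assert (P1 : (Cmod (fst z - fst z0) < eta)%R).
  { pose proof (C_NormedModule_mixin_compat2 _ _ (mkposreal d Hd) Hz1) as h. simpl in h.
    change (minus (fst z) (fst z0)) with (fst z - fst z0)%C in h.
    pose proof (sqrt_pos 2). nra. }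
  assert (P2 : (Cmod (snd z - snd z0) < eta)%R).
  { pose proof (C_NormedModule_mixin_compat2 _ _ (mkposreal d Hd) Hz2) as h. simpl in h.
    change (minus (snd z) (snd z0)) with (snd z - snd z0)%C in h.
    pose proof (sqrt_pos 2). nra. }
  assert (KQ : (Cmod (Q z - Q z0) < e^2)%R).
  { rewrite Q_diff.
    set (p := (fst z - fst z0)%C) in *. set (q := (snd z - snd z0)%C) in *.
    eapply Rle_lt_trans; [apply Cmod_triangle|].
    rewrite Cmod_opp, !Cmod_mult.
    eapply Rle_lt_trans; [apply Rplus_le_compat; apply Rmult_le_compat_l;
       try apply Cmod_ge_0; apply Cmod_triangle|].
    rewrite !Cmod_mult.
    assert (C2e : Cmod 2 = 2%R).
    { unfold Cmod, RtoC; simpl. replace (2 * (2 * 1) + 0 * (0 * 1))%R with (2 * 2)%R by ring.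
      apply sqrt_square; lra. }
    rewrite C2e.
    pose proof (Cmod_ge_0 p). pose proof (Cmod_ge_0 q).
    pose proof (Cmod_ge_0 (fst z0)). pose proof (Cmod_ge_0 (snd z0)).
    unfold M in HetaM. nra. }
  assert (KS : (Cmod (s - s0) * Cmod (s + s0) < e^2)%R).
  { rewrite <- Cmod_mult. replace ((s - s0) * (s + s0))%C with (Q z - Q z0)%C; [exact KQ|].
    rewrite <- Hs, <- Hs0. ring. }
  assert (He1' : (e <= e1)%R) by (unfold e; apply Rmin_l).
  assert (He2' : (e <= e2)%R) by (unfold e; apply Rmin_r).
  destruct (Rlt_or_le (Cmod (s - s0)) e) as [k|k].
  - apply He1. unfold psi, mk4. split; [|split; [|split]].
    + apply C_NormedModule_mixin_compat1. cbn [fst snd]. change (minus s s0) with (s - s0)%C. lra.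
    + apply ball_center.
    + apply ball_le with d; [lra|exact Hz1].
    + apply ball_le with d; [lra|exact Hz2].
  - assert (k2 : (Cmod (s + s0) < e)%R).
    { destruct (Rlt_or_le (Cmod (s + s0)) e) as [k'|k']; [exact k'|].
      pose proof (Cmod_ge_0 (s + s0)). nra. }
    apply He2. unfold psi, mk4. split; [|split; [|split]].
    + apply C_NormedModule_mixin_compat1. cbn [fst snd]. change (minus s (Copp s0)) with (s - Copp s0)%C.
      replace (s - Copp s0)%C with (s + s0)%C by ring. lra.
    + apply ball_center.
    + apply ball_le with d; [lra|exact Hz1].
    + apply ball_le with d; [lra|exact Hz2].
Qed.

Lemma part4 : proper_proj D12 D1 symD.
Proof.
  intros K HK Kc I O hO Hcov.
  set (Wf := fun (L : list I) (z : C2) => forall s : C, (s * s = Q z)%C ->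
        exists i, In i L /\ (psi s z <> mk4 0 0 0 0 /\ O i (psi s z))).
  destruct (Kc (list I) Wf) as [LL HLL].
  - intros L. apply (W_open (fun x => exists i, In i L /\ (x <> mk4 0 0 0 0 /\ O i x))).
    apply open_list. intros i. exact (proj2 (hO i)).
  - intros z Hz.
    destruct (csqrt_ex (Q z)) as [s0 Hs0].
    assert (Hs0' : (Copp s0 * Copp s0 = Q z)%C) by (rewrite <- Hs0; ring).
    destruct (Hcov (psi s0 z)) as [i0 Hi0].
    { split; [apply psi_D12; auto|]. rewrite symD_psi. exact Hz. }
    destruct (Hcov (psi (Copp s0) z)) as [i1 Hi1].
    { split; [apply psi_D12; auto|]. rewrite symD_psi. exact Hz. }
    exists (i0 :: i1 :: nil). intros s Hs.
    destruct (root_cases s s0) as [->| ->]; [congruence| |].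
    + exists i0. split; [simpl; auto|]. split; [apply psi_nz|exact Hi0].
    + exists i1. split; [simpl; auto|]. split; [apply psi_nz|exact Hi1].
  - exists (concat LL). intros x [Hx HKx].
    destruct (D12_facts x Hx) as [Ht [_ Hsq]].
    destruct (HLL (symD x) HKx) as [L [HL HW]].
    destruct (HW (c_s x / c_t x)%C) as [i [Hi [Hnz HO]]].
    { unfold Q, symD; cbn [fst snd].
      transitivity ((c_s x * c_s x) / (c_t x * c_t x))%C; [field; exact Ht|].
      rewrite Hsq. field. exact Ht. }
    exists i. split; [apply in_concat; exists L; auto|].
    assert (Ex : x = sc4 (c_t x) (psi (c_s x / c_t x) (symD x))).
    { destruct x as [s [t [u v]]]. unfold sc4, psi, mk4, symD, c_s, c_t, c_u, c_v in *; cbn [fst snd] in *.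
      change C in s, t, u, v. f_equal; [|f_equal; [|f_equal]]; field; exact Ht. }
    rewrite Ex. apply (proj1 (hO i)); auto.
Qed.

Theorem theorem4p9 :
  (forall x : C4, D12 x -> c_t x <> 0%C) /\
  (forall x : C4, D12 x -> D1 (symD x)) /\
  holo_on_proj D12 symD /\
  proper_proj D12 D1 symD /\
  (forall z w : C, unit_disc z -> unit_disc w -> symD (J z w) = F (sym z w)).
Proof.
  split; [intros x Hx; apply (D12_facts x Hx)|].
  split; [intros x Hx; apply (D12_facts x Hx)|].
  split; [exact part3|].
  split; [exact part4|exact part5].
Qed.
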